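(* Let $A$ be an $n$-qubit algorithm with $A|0^n\rangle=\sum_{x\in\{0,1\}^n}\alpha_x|x\rangle$, let $f:\{0,1\}^n\to\{0,1\}$ partition the basis states into good states $G=\{x:f(x)=1\}$ and bad states $B=\{x:f(x)=0\}$, let $\hat{\mathcal{O}}_p$ be a bounded-error oracle for $f$ with $p\in(1/2,1)$, and let $\delta>0$. For an appropriate $k=O\big(\frac{2p}{(p-1/2)^2}\log(1/\delta)\big)$, let $\hat A$ be the circuit on registers $R_1$ ($n$ qubits), $R_{21},\dots,R_{2k}$ (one qubit each) and $R_{maj}$ (one qubit), all initialised to $|0\rangle$, that: applies $A$ to $R_1$; for $i=1,\dots,k$ applies $\hat{\mathcal{O}}_p$ to $R_1R_{2i}$; and finally applies a majority gate controlled on $R_1$, with inputs $R_{21},\dots,R_{2k}$, writing the majority value into $R_{maj}$. Then, ignoring the states of ancill\ae, $$\hat A|0^{n+k+1}\rangle=\sum_{x\in G}\alpha_x|x\rangle\big[\eta^g_{x0}|\cdots\rangle|0\rangle+\eta^g_{x1}|\cdots\rangle|1\rangle\big]+\sum_{x\in B}\alpha_x|x\rangle\big[\eta^b_{x0}|\cdots\rangle|0\rangle+\eta^b_{x1}|\cdots\rangle|1\rangle\big]$$ (the last qubit being $R_{maj}$, and $|\cdots\rangle$ denoting normalized states of the intermediate registers), such that $|\eta^g_{x0}|^2\le\delta$ and $|\eta^b_{x1}|^2\le\delta$ for all relevant $x$.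
   Context: A bounded-error oracle $\hat{\mathcal{O}}_p$ for $f$ (with $p\in(1/2,1)$) is a unitary acting on $|x\rangle|0\rangle$ ($x\in\{0,1\}^n$, one output qubit) as $|x\rangle|0\rangle\mapsto|x\rangle(a_{x,0}|0\rangle+a_{x,1}|1\rangle)$ with $|a_{x,f(x)}|^2\ge p$, i.e. it marks $x$ correctly with probability at least $p$. The majority gate sets the output bit to $1$ iff at least $k/2$ of its $k$ input bits are $1$. *)

(* Defs.v *)
From mathcomp Require Import all_boot all_algebra.
From mathcomp Require Export complex.
From mathcomp Require Export reals exp.
Set Implicit Arguments. Unset Strict Implicit. Unset Printing Implicit Defensive.
Import GRing.Theory Num.Theory.
Local Open Scope ring_scope.
Local Open Scope complex_scope.

(* Computational basis of an n-qubit register: bit strings x in {0,1}^n. *)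
Definition bits (n : nat) := {ffun 'I_n -> bool}.

Section Quantum.
Variable R : realType.
Local Notation C := (R[i]).

(* A linear operator on the Hilbert space with orthonormal basis T,
   given by its matrix entries U out in = <out|U|in>. *)
Definition op (T : finType) := T -> T -> C.
Definition vec (T : finType) := T -> C.

Definition apply_op (T : finType) (U : op T) (v : vec T) : vec T :=
  fun i => \sum_j U i j * v j.

(* Unitarity: U^dagger U = I (for finite dimension this is unitarity). *)
Definition unitary (T : finType) (U : op T) : Prop :=
  forall i j : T, \sum_k (U k i)^* * U k j = (i == j)%:R.

Definition ket (T : finType) (t : T) : vec T := fun s => (s == t)%:R.

Definition zero_bits (n : nat) : bits n := [ffun => false].

(* Bounded-error oracle O_p for f with amplitudes a:
   |x>|0> |-> |x>(a x 0 |0> + a x 1 |1>), |a x (f x)|^2 >= p. *)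
Definition bounded_error_oracle (n : nat) (f : bits n -> bool) (p : R)
    (O : op (bits n * bool)%type) (a : bits n -> bool -> C) : Prop :=
  unitary O /\
  (forall (x x' : bits n) (b : bool),
      O (x', b) (x, false) = (x' == x)%:R * a x b) /\
  (forall x, p%:C <= `|a x (f x)| ^+ 2).

Definition majority (k : nat) (y : bits k) : bool :=
  (k <= 2 * #|[set i | y i]|)%N.

(* Registers of hat A: R1 (n qubits), R21..R2k (one qubit each), Rmaj. *)
Definition regs (n k : nat) := (bits n * (bits k * bool))%type.

Definition lift_R1 (n k : nat) (A : op (bits n)) : op (regs n k) :=
  fun s t => A s.1 t.1 * (s.2 == t.2)%:R.

Definition lift_R1R2i (n k : nat) (O : op (bits n * bool)%type) (i : 'I_k)
    : op (regs n k) :=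
  fun s t => O (s.1, s.2.1 i) (t.1, t.2.1 i)
             * [forall j, (j != i) ==> (s.2.1 j == t.2.1 j)]%:R
             * (s.2.2 == t.2.2)%:R.

(* Majority gate with inputs R21..R2k, XOR-ing maj into Rmaj
   (a permutation of the basis). *)
Definition maj_gate (n k : nat) : op (regs n k) :=
  fun s t => ((s.1 == t.1) && (s.2.1 == t.2.1)
              && (s.2.2 == t.2.2 (+) majority t.2.1))%:R.

Definition hatA_state (n k : nat) (A : op (bits n)) (O : op (bits n * bool)%type)
    : vec (regs n k) :=
  apply_op (@maj_gate n k)
    (foldl (fun v (i : 'I_k) => apply_op (@lift_R1R2i n k O i) v)
       (apply_op (@lift_R1 n k A) (ket (zero_bits n, (zero_bits k, false))))
       (enum 'I_k)).

End Quantum.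

(* Main.v *)
Require Import Defs.
From mathcomp Require Import all_boot all_algebra.
From mathcomp Require Import complex reals exp sequences.
From mathcomp Require Import ring lra zify order.
Import Order.TTheory GRing.Theory Num.Theory.
Local Open Scope ring_scope.
Local Open Scope complex_scope.

Definition st (R : realType) n k (al : bits n -> R[i]) (a : bits n -> bool -> R[i])
  (s : seq 'I_k) : vec R (regs n k) :=
  fun t => al t.1 * (t.2.2 == false)%:R
     * [forall j, (j \notin s) ==> (t.2.1 j == false)]%:R
     * \prod_(i <- s) a t.1 (t.2.1 i).

Arguments st {R n k}.

Lemma st_step (R : realType) n k (al : bits n -> R[i]) (a : bits n -> bool -> R[i])
  (O : op R (bits n * bool)%type) (s : seq 'I_k) (i : 'I_k) :
  (forall (x x' : bits n) (b : bool), O (x', b) (x, false) = (x' == x)%:R * a x b) ->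
  i \notin s ->
  forall t, apply_op (lift_R1R2i O i) (st al a s) t = st al a (rcons s i) t.
Proof.
move=> HO Hi [x' [y' m']].
pose y0 : bits k := [ffun j => if j == i then false else y' j].
rewrite /apply_op (bigD1 (x', (y0, m'))) //= big1 ?addr0.
- rewrite /lift_R1R2i /st /= !ffunE eqxx HO eqxx mul1r.
  have -> : [forall j, (j != i) ==> (y' j == y0 j)].
    by apply/forallP => j; apply/implyP => /negbTE Hj; rewrite ffunE Hj.
  have -> : [forall j, (j \notin s) ==> (y0 j == false)] =
            [forall j, (j \notin rcons s i) ==> (y' j == false)].
    apply: eq_forallb => j; rewrite mem_rcons in_cons ?ffunE.
    by case: (eqVneq j i) => [->|Hj] /=; rewrite ?implybT.
  rewrite big_rcons /=.
  have -> : \prod_(j <- s) a x' (y0 j) = \prod_(j <- s) a x' (y' j).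
    apply: eq_big_seq => j Hj; rewrite ffunE.
    by case: (eqVneq j i) => [E|_] //; move: Hi; rewrite -E Hj.
  by rewrite eqxx !mulr1 [LHS]mulrC !mulrA.
- move=> [x [y m]] /= Hne.
  rewrite /lift_R1R2i /st /=.
  case Hf: [forall j, _ ==> (_ == y j)]; last by rewrite !(mulr0, mul0r).
  have [Hm|Hm] := eqVneq m' m; last by rewrite !(mulr0, mul0r).
  subst m'.
  case Hyi: (y i).
    case Hn : [forall j, _ ==> (y j == false)]; last by rewrite !(mulr0, mul0r).
    by move/forallP: Hn => /(_ i); rewrite Hi Hyi.
  rewrite HO.
  have [Hx|Hx] := eqVneq x' x; last by rewrite !(mulr0, mul0r).
  subst x'.
  exfalso; move/negP: Hne; apply; apply/eqP; congr (_, (_, _)).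
  apply/ffunP => j; rewrite ffunE.
  case: eqVneq => [->|Hj]; first by rewrite Hyi.
  by apply/esym/eqP; move/forallP: Hf => /(_ j); rewrite Hj.
Qed.

Lemma st_base (R : realType) n k (A : op R (bits n)) (a : bits n -> bool -> R[i]) t :
  apply_op (@lift_R1 R n k A) (ket R (zero_bits n, (zero_bits k, false))) t =
  st (apply_op A (ket R (zero_bits n))) a [::] t.
Proof.
case: t => [x [y m]].
rewrite /apply_op /st /ket /lift_R1 /=.
rewrite (bigD1 (zero_bits n, (zero_bits k, false))) //= big1 ?addr0; last first.
  by move=> u /negbTE ->; rewrite mulr0.
rewrite (bigD1 (zero_bits n)) //= big1 ?addr0; last first.
  by move=> u /negbTE ->; rewrite mulr0.
rewrite big_nil !eqxx !mulr1.
have -> : [forall j, (j \notin [::]) ==> (y j == false)] = (y == zero_bits k).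
  apply/forallP/eqP => [H|->]; last by move=> j; rewrite ffunE.
  by apply/ffunP => j; rewrite ffunE; apply/eqP; apply: (H j).
rewrite xpair_eqE.
by case: (y == _); case: (m == _); rewrite /= ?(mulr0, mulr1).
Qed.

Lemma st_fold (R : realType) n k (A : op R (bits n)) (a : bits n -> bool -> R[i])
  (O : op R (bits n * bool)%type) :
  (forall (x x' : bits n) (b : bool), O (x', b) (x, false) = (x' == x)%:R * a x b) ->
  forall s : seq 'I_k, uniq s -> forall t,
  foldl (fun v (i : 'I_k) => apply_op (@lift_R1R2i R n k O i) v)
       (apply_op (@lift_R1 R n k A) (ket R (zero_bits n, (zero_bits k, false)))) s t
  = st (apply_op A (ket R (zero_bits n))) a s t.
Proof.
move=> HO; elim/last_ind => [|s i IH]; first by move=> _ t; apply: st_base.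
rewrite rcons_uniq => /andP[Hi Hu] t.
rewrite foldl_rcons -(@st_step R n k _ a O s i HO Hi).
by rewrite /apply_op; apply: eq_bigr => u _; rewrite IH.
Qed.

Lemma circuit (R : realType) n k (A : op R (bits n)) (a : bits n -> bool -> R[i])
  (O : op R (bits n * bool)%type) :
  (forall (x x' : bits n) (b : bool), O (x', b) (x, false) = (x' == x)%:R * a x b) ->
  forall x y m, @hatA_state R n k A O (x, (y, m)) =
     apply_op A (ket R (zero_bits n)) x * (\prod_i a x (y i)) * (m == majority y)%:R.
Proof.
move=> HO x y m.
rewrite /hatA_state {1}/apply_op.
rewrite (bigD1 (x, (y, m (+) majority y))) //= big1 ?addr0; last first.
  move=> [x1 [y1 m1]] /= Hne; rewrite /maj_gate /=.
  case E: (_ && _); last by rewrite mul0r.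
  move: E Hne => /andP[/andP[/eqP <- /eqP <-] /eqP ->].
  by rewrite addbK eqxx.
rewrite /maj_gate /= !eqxx addbK /= eqxx mul1r (@st_fold R n k A a O HO _ (enum_uniq _)) // /st /=.
have -> : [forall j, (j \notin enum 'I_k) ==> (y j == false)].
  by apply/forallP => j; rewrite mem_enum.
rewrite big_enum /= mulr1.
have -> : ((m (+) majority y) == false) = (m == majority y).
  by case: m; case: (majority y).
by rewrite mulrAC.
Qed.
Lemma term_bound (R : realType) h (w : bool -> R) (g : bool) (y : bits (2 * h)) :
  0 <= w (~~ g) -> w (~~ g) <= w g ->
  majority y = ~~ g ->
  \prod_i w (y i) <= (w (~~ g) * w g) ^+ h.
Proof.
move=> He Heq Hm.
have Hq : 0 <= w g by apply: le_trans Heq.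
rewrite (bigID (fun i => y i != g)) /=.
rewrite (eq_bigr (fun=> w (~~ g))); last by move=> i; case: (y i); case: g He Heq Hm Hq.
rewrite [X in _ * X](eq_bigr (fun=> w g)); last by move=> i; rewrite negbK => /eqP ->.
rewrite !prodr_const.
set b := #|_|.
set b' := #|_|.
have Hbb : (b + b' = 2 * h)%N.
  rewrite -[RHS](card_ord (2 * h)) -(cardC [pred i | y i != g]).
  by congr (_ + _); apply: eq_card => i.
have Hb : (h <= b)%N.
  move: Hm; rewrite /majority.
  destruct g => /=.
  - move/negbT; rewrite -ltnNge => H.
    have E : (#|[set i | y i]| + b = 2 * h)%N.
      rewrite -[RHS](card_ord (2 * h)) -(cardC [set i | y i]); congr (_ + _).
      by rewrite /b; apply: eq_card => i; rewrite !inE unfold_in /=; case: (y i).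
    move: H E; move: #|[set i | y i]| => c; clear; lia.
  - move=> H.
    have -> : b = #|[set i | y i]| by rewrite /b; apply: eq_card => i; rewrite !inE unfold_in /=; case: (y i).
    move: H; move: #|[set i | y i]| => c; clear; lia.
clearbody b b'.
have -> : b' = (h - (b - h))%N by lia.
have Hd : (b - h <= h)%N by lia.
move: (b - h)%N Hd (subnKC Hb) => d Hd <-.
rewrite exprD exprMn -mulrA ler_wpM2l ?exprn_ge0 //.
rewrite -{2}(subnK Hd) exprD mulrC ler_wpM2l ?exprn_ge0 //.
by rewrite lerXn2r // nnegrE.
Qed.

Lemma tail_bound (R : realType) h (w : bool -> R) (g : bool) (p : R) :
  0 <= w (~~ g) -> w false + w true = 1 -> p <= w g -> 1 / 2 < p ->
  \sum_(y : bits (2 * h) | majority y == ~~ g) \prod_i w (y i)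
    <= (1 - 4 * (p - 1 / 2) ^+ 2) ^+ h.
Proof.
move=> He Hs Hp Hp2.
have Hsum : w (~~ g) + w g = 1 by destruct g; rewrite /= // addrC.
have Hle : w (~~ g) <= w g by lra.
apply: (@le_trans _ _ (\sum_(y : bits (2 * h) | majority y == ~~ g) (w (~~ g) * w g) ^+ h)).
  by apply: ler_sum => y /eqP Hm; apply: term_bound.
apply: (@le_trans _ _ (\sum_(y : bits (2 * h)) (w (~~ g) * w g) ^+ h)).
  rewrite [X in _ <= X](bigID (fun y => majority y == ~~ g)) /= lerDl.
  by apply: sumr_ge0 => y _; rewrite exprn_ge0 // mulr_ge0 //; lra.
rewrite sumr_const.
have -> : #|[pred _ : bits (2 * h) | true]| = (2 ^ (2 * h))%N.
  by rewrite -[in RHS](card_ord (2*h)) -card_bool -card_ffun.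
rewrite expnM -[X in X <= _]mulr_natr natrX -exprMn.
rewrite (_ : (2 ^ 2)%:R = 4 :> R); last by [].
have Hq1 : w g <= 1 by lra.
have Hpr : 0 <= (w g - p) * (w g + p - 1) by apply: mulr_ge0; lra.
apply: lerXn2r; rewrite ?nnegrE.
- by apply: mulr_ge0 => //; apply: mulr_ge0 => //; lra.
- nra.
- nra.
Qed.

Lemma choose_h (R : realType) (p delta : R) : 1/2 < p -> p < 1 -> 0 < delta ->
  let L := Num.max 1 (ln delta^-1) in
  let h := (Num.truncn (L * ((p - 1/2)^+2)^-1 / 4)).+1 in
  ((2 * h)%N%:R <= 1 * (2 * p / (p - 1 / 2) ^+ 2) * L) /\
  (1 - 4 * (p - 1/2)^+2)^+h <= delta.
Proof.
move=> Hp1 Hp2 Hd L h.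
set e := p - 1/2.
have He : 0 < e by rewrite /e; lra.
have He2 : e < 1/2 by rewrite /e; lra.
have Hee : 0 < e ^+ 2 by rewrite exprn_gt0.
have Hee4 : e ^+ 2 < 1/4.
  rewrite expr2; nra.
set t := (e ^+ 2)^-1.
have Ht : 0 < t by rewrite invr_gt0.
have Het : e ^+ 2 * t = 1 by rewrite mulfV // gt_eqF.
have Hpr : 0 < (1/4 - e ^+ 2) * t by apply: mulr_gt0; lra.
have Ht4 : 4 < t by nra.
have HL1 : 1 <= L by rewrite /L le_max lexx.
have HL2 : ln delta^-1 <= L by rewrite /L le_max lexx orbT.
set x := L * t / 4.
have Hx0 : 0 <= x by rewrite /x; apply: mulr_ge0; [apply: mulr_ge0|]; lra.
have Hh1 : h%:R <= x + 1.
  by rewrite /h -natr1 lerD2r truncn_le.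
have Hh2 : x < h%:R by rewrite /h truncnS_gt.
split.
  rewrite natrM /= -/e -/t mul1r.
  have HLt : 4 <= L * t by nra.
  have Hx : x * 4 = L * t by rewrite /x; field.
  have H2p : 0 <= (2 * p - 1) * (L * t) by apply: mulr_ge0; lra.
  rewrite (_ : 2%:R = 2 :> R) //.
  nra.
have H0 : 0 <= 1 - 4 * e ^+ 2 by lra.
apply: (@le_trans _ _ (expR (- (4 * e ^+ 2)) ^+ h)).
  by apply: lerXn2r; rewrite ?nnegrE ?expR_ge0 // (le_trans _ (expR_ge1Dx _)) // lexx.
rewrite -expRM_natl -[X in _ <= X](lnK Hd) ler_expR.
have Hln : ln delta = - ln delta^-1 by rewrite lnV ?opprK ?posrE.
have Hx : x * (4 * e ^+ 2) = L.
  have -> : x * (4 * e ^+ 2) = L * (e ^+ 2 * t) by rewrite /x; field.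
  by rewrite Het mulr1.
have Hm : 0 < (h%:R - x) * (4 * e ^+ 2) by apply: mulr_gt0; lra.
rewrite Hln; nra.
Qed.

Lemma normsqE (R : realType) (z : R[i]) : `|z| ^+ 2 = (complex.Re (`|z| ^+ 2))%:C.
Proof. by rewrite RRe_real // rpredX // normr_real. Qed.

Lemma conj_mul (R : realType) (z : R[i]) : (z^* * z)%C = `|z| ^+ 2.
Proof.
rewrite -add_Re2_Im2; case: z => u v /=.
by apply/eqP; rewrite eq_complex /=; apply/andP; split; apply/eqP; ring.
Qed.

Lemma norm_sqrt_real (R : realType) (r : R) : 0 <= r ->
  `|(Num.sqrt r)%:C| ^+ 2 = r%:C.
Proof. by move=> Hr; rewrite -add_Re2_Im2 /= expr0n addr0 sqr_sqrtr. Qed.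

Lemma col_norm (R : realType) n (O : op R (bits n * bool)%type)
  (a : bits n -> bool -> R[i]) x :
  (forall (x x' : bits n) (b : bool), O (x', b) (x, false) = (x' == x)%:R * a x b) ->
  \sum_k `|O k (x, false)| ^+ 2 = `|a x false| ^+ 2 + `|a x true| ^+ 2.
Proof.
move=> HO.
transitivity (\sum_(x' : {ffun 'I_n -> bool}) \sum_(b : bool) `|O (x', b) (x, false)| ^+ 2).
  by rewrite pair_bigA; apply: eq_bigr => -[].
rewrite (bigD1 x) //= [X in _ + X = _]big1 ?addr0; last first.
  by move=> x' Hx'; rewrite big1 // => b _; rewrite HO (negbTE Hx') mul0r normr0 expr0n.
by rewrite big_bool /= !HO eqxx !mul1r addrC.
Qed.

Theorem lemma2 (R : realType) :
  exists c : R, 0 < c /\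
  forall (n : nat) (A : op R (bits n)) (f : bits n -> bool) (p : R)
         (O : op R (bits n * bool)%type) (a : bits n -> bool -> R[i]) (delta : R),
    unitary A ->
    1 / 2 < p -> p < 1 ->
    bounded_error_oracle f p O a ->
    0 < delta ->
    exists k : nat,
      (k%:R <= c * (2 * p / (p - 1 / 2) ^+ 2) * Num.max 1 (ln (delta^-1))) /\
      let alpha := apply_op A (ket R (zero_bits n)) in
      let psi := @hatA_state R n k A O in
      exists (eta : bits n -> bool -> R[i]) (chi : bits n -> bool -> bits k -> R[i]),
        (forall x m, \sum_y `|chi x m y| ^+ 2 = 1) /\
        (forall x y m, psi (x, (y, m)) = alpha x * eta x m * chi x m y) /\
        (forall x, f x -> `|eta x false| ^+ 2 <= delta%:C) /\
        (forall x, ~~ f x -> `|eta x true| ^+ 2 <= delta%:C).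
Proof.
exists 1; split; first exact: ltr01.
move=> n A f p O a delta HA Hp1 Hp2 [HOu [HO Hpa]] Hd.
have [Hk Hb] := @choose_h R p delta Hp1 Hp2 Hd.
set h := (Num.truncn _).+1 in Hk Hb.
exists (2 * h)%N; split; first exact: Hk.
move=> alpha psi.
pose W x b := complex.Re (`|a x b| ^+ 2).
have WC : forall x b, `|a x b| ^+ 2 = (W x b)%:C by move=> x b; apply: normsqE.
have W0 : forall x b, 0 <= W x b.
  by move=> x b; have := exprn_ge0 2 (normr_ge0 (a x b)); rewrite WC ler0c.
have Wp : forall x, p <= W x (f x).
  by move=> x; have := Hpa x; rewrite WC lecR.
have W1 : forall x, W x false + W x true = 1.
  move=> x; apply: complexI; rewrite rmorph1.
  suff <- : `|a x false| ^+ 2 + `|a x true| ^+ 2 = 1 by rewrite !WC rmorphD.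
  have := HOu (x, false) (x, false); rewrite eqxx /= => H.
  apply: etrans (esym (@col_norm R n O a x HO)) _; apply: etrans _ H.
  by apply: eq_bigr => k _; rewrite conj_mul.
pose v x (y : bits (2 * h)) := \prod_i a x (y i).
have vC : forall x y, `|v x y| ^+ 2 = (\prod_i W x (y i))%:C.
  move=> x y; rewrite normr_prod -prodrXl rmorph_prod.
  by apply: eq_bigr => i _; apply: WC.
pose Pr x m := \sum_(y : bits (2 * h) | majority y == m) \prod_i W x (y i).
have Pr0 : forall x m, 0 <= Pr x m.
  by move=> x m; apply: sumr_ge0 => y _; apply: prodr_ge0 => i _.
pose eta x m := (Num.sqrt (Pr x m))%:C.
pose chi x m (y : bits (2 * h)) := if Pr x m == 0 then (y == zero_bits (2 * h))%:R
   else (m == majority y)%:R * v x y / eta x m.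
have etaN : forall x m, Pr x m != 0 -> eta x m != 0.
  move=> x m HP; apply/eqP => /(congr1 (fun z => complex.Re z)) /= /eqP.
  by rewrite sqrtr_eq0 le_eqVlt (negbTE HP) /= ltNge Pr0.
have psiE : forall x y m, psi (x, (y, m)) = alpha x * v x y * (m == majority y)%:R.
  by move=> x y m; apply: circuit.
exists eta, chi; split; [|split; [|split]].
- move=> x m; rewrite /chi; have [HP|HP] := eqVneq (Pr x m) 0 => /=.
    rewrite (bigD1 (zero_bits (2 * h))) //= eqxx normr1 expr1n big1 ?addr0 //.
    by move=> y /negbTE ->; rewrite normr0 expr0n.
  have -> : \sum_y `|(m == majority y)%:R * v x y / eta x m| ^+ 2 =
            \sum_(y : bits (2 * h)) ((m == majority y)%:R * (\prod_i W x (y i))%:C) / (Pr x m)%:C.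
    apply: eq_bigr => y _.
    rewrite normf_div normrM !exprMn exprVn norm_sqrt_real // vC.
    by case: (m == majority y); rewrite ?normr1 ?normr0 ?expr1n ?expr0n.
  rewrite -mulr_suml.
  have -> : \sum_(y : bits (2 * h)) (m == majority y)%:R * (\prod_i W x (y i))%:C = (Pr x m)%:C.
    rewrite /Pr rmorph_sum [RHS]big_mkcond /=; apply: eq_bigr => y _.
    by rewrite eq_sym; case: ifP; rewrite ?mul1r ?mul0r ?rmorph0.
  rewrite mulfV //; apply/eqP => E; move/eqP: HP; apply.
  by apply: complexI; rewrite E rmorph0.
- move=> x y m; rewrite psiE /chi; have [HP|HP] := eqVneq (Pr x m) 0 => /=.
    rewrite /eta HP sqrtr0 rmorph0 mulr0 mul0r.
    case E: (m == majority y); last by rewrite mulr0.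
    have Hz : \prod_i W x (y i) = 0.
      have Hnn : forall y' : bits (2 * h), majority y' == m -> 0 <= \prod_i W x (y' i).
        by move=> y' _; apply: prodr_ge0.
      have Hy : majority y == m by rewrite eq_sym.
      exact: (@psumr_eq0P _ _ (fun y : bits (2 * h) => majority y == m)
                (fun y => \prod_i W x (y i)) Hnn HP y Hy).
    have : `|v x y| ^+ 2 = 0 by rewrite vC Hz rmorph0.
    by move/eqP; rewrite expf_eq0 /= normr_eq0 => /eqP ->; rewrite mulr0 mul0r.
  have Hne := etaN x m HP.
  by field.
- move=> x Hf; rewrite /eta norm_sqrt_real // lecR.
  have := @tail_bound R h (W x) (f x) p (W0 _ _) (W1 x) (Wp x) Hp1.
  rewrite Hf /= => H; exact: le_trans H Hb.
- move=> x Hf; rewrite /eta norm_sqrt_real // lecR.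
  have := @tail_bound R h (W x) (f x) p (W0 _ _) (W1 x) (Wp x) Hp1.
  rewrite (negbTE Hf) /= => H; exact: le_trans H Hb.
Qed.
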